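(* Let $T$ be a tree with $m$ edges satisfying $\sum_{e_{uv}\in E(T)}(d_u+d_v)=4m$, let $s$ be a positive integer, and let $T_s$ be its $s$-th subdivision tree. Let $T'_s$ be any single-edge division tree of $T_s$. Then $T'_s$ is neutral, and any single-edge division tree $(T'_s)'$ of $T'_s$ is neutral as well.
   Context: All graphs are finite, simple and connected; $d_u$ denotes degree and sums over edges count each edge once. The $s$-th subdivision graph $G_s$ of $G$ is obtained by inserting $s$ new vertices into each edge of $G$. A single-edge division graph $G'$ of $G$ is obtained by inserting one new vertex into one arbitrarily chosen edge of $G$. For a graph $G=(V,E)$ with $m=|E|\geq1$, the assortativity coefficient is $$r(G)=\frac{m^{-1}\sum_{e_{uv}\in E} d_{u}d_{v}-\Big[m^{-1}\sum_{e_{uv}\in E} \tfrac{1}{2}(d_{u}+d_{v})\Big]^{2}}{m^{-1}\sum_{e_{uv}\in E} \tfrac{1}{2}(d^{2}_{u}+d^{2}_{v})-\Big[m^{-1}\sum_{e_{uv}\in E} \tfrac{1}{2}(d_{u}+d_{v})\Big]^{2}},$$ defined whenever the denominator is nonzero; $G$ is neutral if $r(G)$ is defined and equals $0$. *)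

(* Defs.v *)
From HB Require Import structures.
From mathcomp Require Import all_boot all_order all_algebra.
Set Implicit Arguments. Unset Strict Implicit. Unset Printing Implicit Defensive.
Import Order.TTheory GRing.Theory Num.Theory.

Record graph := Graph { vert : finType; adj : rel vert }.
Arguments adj : clear implicits.

Definition simple_graph (G : graph) : Prop :=
  symmetric (adj G) /\ irreflexive (adj G).

Definition connected (G : graph) : Prop :=
  forall x y : vert G, connect (adj G) x y.

Definition acyclic (G : graph) : Prop :=
  forall c : seq (vert G), uniq c -> 3 <= size c -> ~~ cycle (adj G) c.

Definition is_tree (G : graph) : Prop :=
  [/\ simple_graph G, connected G & acyclic G].

(* each (undirected) edge counted once, as the pair (u,v) with u before v *)
Definition edges (G : graph) : {set vert G * vert G} :=
  [set p | adj G p.1 p.2 && (enum_rank p.1 < enum_rank p.2)%N].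

Definition deg (G : graph) (x : vert G) : nat := #|[set y | adj G x y]|.

Definition nedges (G : graph) : nat := #|edges G|.

Definition edge_type (G : graph) := {p : vert G * vert G | p \in edges G}.

(* s-th subdivision: each edge (a,b) becomes a path a - (e,0) - ... - (e,s-1) - b *)
Definition subdiv_adj (s : nat) (G : graph)
  (x y : (vert G + (edge_type G * 'I_s))%type) : bool :=
  match x, y with
  | inl a, inl b => (s == 0)%N && adj G a b
  | inl a, inr (e, i) =>
      ((a == (val e).1) && (i == 0 :> nat)) || ((a == (val e).2) && (i == s.-1 :> nat))
  | inr (e, i), inl a =>
      ((a == (val e).1) && (i == 0 :> nat)) || ((a == (val e).2) && (i == s.-1 :> nat))
  | inr (e, i), inr (f, j) => (e == f) && ((i.+1 == j :> nat) || (j.+1 == i :> nat))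
  end.

Definition subdiv (s : nat) (G : graph) : graph :=
  @Graph (vert G + (edge_type G * 'I_s))%type (@subdiv_adj s G).

(* single-edge division: insert one new vertex (None) into the edge {u,v} *)
Definition sdiv1_adj (G : graph) (u v : vert G) (x y : option (vert G)) : bool :=
  match x, y with
  | Some a, Some b => adj G a b && ~~ (((a == u) && (b == v)) || ((a == v) && (b == u)))
  | None, Some b => (b == u) || (b == v)
  | Some a, None => (a == u) || (a == v)
  | None, None => false
  end.

Definition sdiv1 (G : graph) (u v : vert G) : graph :=
  @Graph (option (vert G)) (@sdiv1_adj G u v).

Local Open Scope ring_scope.

(* the three edge averages in the assortativity coefficient *)
Definition avg_prod (G : graph) : rat :=
  (\sum_(p in edges G) ((deg p.1 * deg p.2)%N)%:R) / (nedges G)%:R.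
Definition avg_half_sum (G : graph) : rat :=
  (\sum_(p in edges G) ((deg p.1 + deg p.2)%N)%:R / 2) / (nedges G)%:R.
Definition avg_half_sq (G : graph) : rat :=
  (\sum_(p in edges G) ((deg p.1 ^ 2 + deg p.2 ^ 2)%N)%:R / 2) / (nedges G)%:R.

Definition assort_num (G : graph) : rat := avg_prod G - avg_half_sum G ^+ 2.
Definition assort_den (G : graph) : rat := avg_half_sq G - avg_half_sum G ^+ 2.

Definition assortativity (G : graph) : rat := assort_num G / assort_den G.

(* r(G) is defined (m >= 1, nonzero denominator) and equals 0 *)
Definition neutral (G : graph) : Prop :=
  [/\ (1 <= nedges G)%N, assort_den G != 0 & assortativity G = 0].

(* Main.v *)
Require Import Defs.
From HB Require Import structures.
From mathcomp Require Import all_boot all_order all_algebra.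
Set Implicit Arguments. Unset Strict Implicit. Unset Printing Implicit Defensive.
Import Order.TTheory GRing.Theory Num.Theory.
From mathcomp Require Import ring lra zify.

Lemma big_opt (T : finType) (F : option T -> nat) :
  \sum_(x : option T) F x = F None + \sum_(a : T) F (Some a).
Proof.
rewrite (bigD1 None) //=; congr (_ + _).
rewrite (reindex_omap Some id) //=.
  by apply: eq_bigl => a; rewrite eqxx.
by case.
Qed.

Lemma dart (G : graph) (F : vert G -> vert G -> nat) :
  symmetric (adj G) -> irreflexive (adj G) -> (forall x y, F x y = F y x) ->
  2 * \sum_(p in edges G) F p.1 p.2 = \sum_x \sum_(y | adj G x y) F x y.
Proof.
move=> sym irr FS.
rewrite pair_big_dep [RHS](bigID (fun p => enum_rank p.1 < enum_rank p.2)) /=.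
rewrite mul2n -addnn. congr (_ + _).
  by apply: eq_bigl => p; rewrite in_set.
rewrite (reindex_inj (h := fun p : vert G * vert G => (p.2, p.1))); last first.
  by move=> [a b] [c d] /= [-> ->].
apply: eq_big => [[a b]|[a b]] /=; last by rewrite FS.
rewrite in_set /= sym; case Hab: (adj G a b) => //=.
have ne : (enum_rank a : nat) != enum_rank b.
  apply/negP => /eqP /val_inj /enum_rank_inj E.
  by move: Hab; rewrite E irr.
by rewrite -leqNgt ltn_neqAle eq_sym ne.
Qed.


Section Gen.
Variable G : graph.
Hypothesis sym : symmetric (adj G).
Hypothesis irr : irreflexive (adj G).

Lemma degE (x : vert G) : deg x = \sum_(y | adj G x y) 1.
Proof. by rewrite /deg sum1_card cardsE. Qed.

Lemma nedgesE : 2 * nedges G = \sum_(x : vert G) deg x.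
Proof.
rewrite /nedges -sum1_card (@dart G (fun _ _ => 1)) //.
by apply: eq_bigr => x _; rewrite degE.
Qed.

Lemma dsum (f : vert G -> nat) :
  \sum_(p in edges G) (f p.1 + f p.2) = \sum_(x : vert G) deg x * f x.
Proof.
apply/eqP; rewrite -(eqn_pmul2l (isT : 0 < 2)); apply/eqP.
rewrite (@dart G (fun x y => f x + f y)) //; last by move=> *; rewrite addnC.
have E1 : forall x, \sum_(y | adj G x y) f x = deg x * f x.
  by move=> x; rewrite degE big_distrl /=; apply: eq_bigr => y _; rewrite mul1n.
rewrite (eq_bigr (fun x => \sum_(y | adj G x y) f x + \sum_(y | adj G x y) f y));
  last by move=> x _; rewrite big_split.
rewrite big_split /= (eq_bigr _ (fun x _ => E1 x)) mul2n -addnn; congr (_ + _).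
rewrite (exchange_big_dep xpredT) //=; apply: eq_bigr => y _.
rewrite -E1; apply: eq_bigl => x; by rewrite sym.
Qed.

Lemma neutral_of :
  (forall x y, adj G x y -> deg x = 2 \/ deg y = 2) ->
  \sum_(x : vert G) deg x * deg x = \sum_(x : vert G) 2 * deg x ->
  (exists w : vert G, deg w != 0 /\ deg w != 2) ->
  neutral G.
Proof.
move=> H2 Hsq [w [w0 w2]].
set m := nedges G.
have hm := nedgesE.
have S1 : \sum_(p in edges G) (deg p.1 + deg p.2) = 4 * m.
  by rewrite (@dsum (@deg G)) Hsq -big_distrr /= -hm mulnA.
have P : \sum_(p in edges G) deg p.1 * deg p.2 = 4 * m.
  have : \sum_(p in edges G) (deg p.1 * deg p.2 + 4) = \sum_(p in edges G) 2 * (deg p.1 + deg p.2).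
    apply: eq_bigr => p; rewrite in_set => /andP [/H2 [->|->] _]; lia.
  rewrite big_split /= sum_nat_const -big_distrr /= S1 -/(nedges G) -/m; lia.
have S3 : \sum_(p in edges G) (deg p.1 ^ 2 + deg p.2 ^ 2) != 8 * m.
  rewrite (@dsum (fun x => deg x ^ 2)); apply/eqP => E.
  have Hle : forall d, 4 * (d * d) <= d * d ^ 2 + 4 * d.
    case=> [|[|[|k]]] //; have -> : k.+3 * k.+3 ^ 2 + 4 * k.+3 = 4 * (k.+3 * k.+3) + k.+3 * k.+1 ^ 2.
      by rewrite -[k.+3]addn3 -[k.+1]addn1; ring.
    exact: leq_addr.
  have Hlt : forall d, d != 0 -> d != 2 -> 4 * (d * d) < d * d ^ 2 + 4 * d.
    case=> [|[|[|k]]] // _ _; have -> : k.+3 * k.+3 ^ 2 + 4 * k.+3 = 4 * (k.+3 * k.+3) + k.+3 * k.+1 ^ 2.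
      by rewrite -[k.+3]addn3 -[k.+1]addn1; ring.
    by rewrite -addn1 leq_add2l muln_gt0 expn_gt0.
  have Es : \sum_(x : vert G) (deg x * deg x ^ 2 + 4 * deg x) = \sum_(x : vert G) 4 * (deg x * deg x).
    by rewrite big_split /= -!big_distrr /= E Hsq -big_distrr /= -hm; lia.
  move: Es; rewrite (bigD1 w) //= [in RHS](bigD1 w) //=.
  have L1 := Hlt _ w0 w2.
  have L2 : \sum_(i | i != w) 4 * (deg i * deg i) <= \sum_(i | i != w) (deg i * deg i ^ 2 + 4 * deg i).
    by apply: leq_sum => i _; apply: Hle.
  lia.
have m1 : (1 <= m)%N.
  have : (deg w <= \sum_(x : vert G) deg x)%N by rewrite (bigD1 w) //= leq_addr.
  rewrite -hm; move: w0; case: (deg w) => // k _; lia.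
have mR : (m%:R : rat) != 0%R by rewrite pnatr_eq0 -lt0n.
have hsum : avg_half_sum G = 2%R.
  rewrite /avg_half_sum -mulr_suml -natr_sum S1 natrM -/m; field; exact: mR.
split => //.
  rewrite /assort_den hsum /avg_half_sq -mulr_suml -natr_sum.
  apply/eqP => E; move: S3 => /eqP; apply.
  apply/eqP; rewrite -(eqr_nat rat) natrM; apply/eqP.
  move/eqP: E; rewrite subr_eq0 -/m => /eqP E.
  have -> : ((\sum_(p in edges G) (deg p.1 ^ 2 + deg p.2 ^ 2))%:R =
     ((\sum_(p in edges G) (deg p.1 ^ 2 + deg p.2 ^ 2))%:R / 2 / m%:R) * 2 * m%:R :> rat)%R.
    by field.
  by rewrite E; ring.
rewrite /assortativity /assort_num hsum /avg_prod -natr_sum P natrM -/m.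
have -> : (4%:R * m%:R / m%:R - 2 ^+ 2 : rat)%R = 0%R by field.
by rewrite mul0r.
Qed.
End Gen.



Section S1.
Variable G : graph.
Hypothesis sym : symmetric (adj G).
Hypothesis irr : irreflexive (adj G).
Variables u v : vert G.
Hypothesis huv : adj G u v.

Let G' := sdiv1 u v.

Lemma sdiv1_sym : symmetric (adj G').
Proof.
case=> [a|] [b|] //=; rewrite sym; congr (_ && ~~ _).
by rewrite orbC [(b == u) && _]andbC [(b == v) && _]andbC.
Qed.

Lemma sdiv1_irr : irreflexive (adj G').
Proof. by case=> [a|] //=; rewrite irr. Qed.

Lemma uv_neq : u != v.
Proof. by apply/eqP => E; move: huv; rewrite E irr. Qed.

Lemma deg_None : deg (None : vert G') = 2.
Proof.
rewrite /deg (_ : [set y | adj G' None y] = [set Some u; Some v]).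
  by rewrite cards2 (inj_eq (@Some_inj _)) uv_neq.
by apply/setP => -[b|]; rewrite !inE //= (inj_eq (@Some_inj _)).
Qed.

Lemma deg_Some a : deg (Some a : vert G') = deg a.
Proof.
pose g (y : option (vert G)) := match y with None => if a == u then v else u | Some b => b end.
rewrite /deg.
have -> : [set y | adj G a y] = g @: [set y | adj G' (Some a) y].
  apply/setP => b; rewrite in_set; apply/idP/imsetP.
    move=> Hab.
    case E: ((a == u) && (b == v) || (a == v) && (b == u)).
      exists None; rewrite ?inE /=.
        by move: E => /orP [/andP [-> _]|/andP [-> _]]; rewrite ?orbT.
      move: E => /orP [/andP [/eqP -> /eqP ->]|/andP [/eqP -> /eqP ->]]; rewrite ?eqxx //.
      by rewrite eq_sym (negbTE uv_neq).
    by exists (Some b); rewrite // inE /= Hab E.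
  case=> -[y|]; rewrite inE /=.
    by move=> /andP [H _] ->.
  move=> /orP [/eqP ->|/eqP ->] ->; rewrite ?eqxx //.
  by rewrite eq_sym (negbTE uv_neq) sym.
rewrite card_in_imset //.
move=> [y1|] [y2|]; rewrite !inE /= => H1 H2 //=.
- by move=> ->.
- move=> E; exfalso; move: H2 H1; rewrite E.
  case: (a =P u) => [->|nau] /=; first by rewrite !eqxx /= andbF.
  by move=> /eqP ->; rewrite !eqxx andbF.
- move=> E; exfalso; move: H1 H2; rewrite -E.
  case: (a =P u) => [->|nau] /=; first by rewrite !eqxx /= andbF.
  by move=> /eqP ->; rewrite !eqxx andbF.
Qed.

End S1.

Definition Inv (G : graph) : Prop :=
  [/\ symmetric (adj G), irreflexive (adj G),
      (forall x y, adj G x y -> deg x = 2 \/ deg y = 2),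
      \sum_(x : vert G) deg x * deg x = \sum_(x : vert G) 2 * deg x &
      exists w : vert G, deg w != 0 /\ deg w != 2].

Lemma Inv_sdiv1 (G : graph) (u v : vert G) : Inv G -> adj G u v -> Inv (sdiv1 u v).
Proof.
move=> [sym irr H2 Hs [w Hw]] huv.
have dN := deg_None irr huv.
have dS := deg_Some sym irr huv.
split.
- exact: sdiv1_sym.
- exact: sdiv1_irr.
- move=> [a|] [b|] //=; rewrite ?dN ?dS; auto.
  by move=> /andP [/H2 H _].
- rewrite !big_opt dN; congr (_ + _).
  rewrite (eq_bigr (fun a => deg a * deg a)); last by move=> a _; rewrite dS.
  rewrite Hs; apply: eq_bigr => a _; by rewrite dS.
- by exists (Some w); rewrite dS.
Qed.

Lemma card2 (T : finType) (A : {set T}) p1 p2 : p1 \in A -> p2 \in A -> p1 != p2 ->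
  (forall y, y \in A -> y = p1 \/ y = p2) -> #|A| = 2.
Proof.
move=> h1 h2 ne H; have -> : A = [set p1; p2].
  apply/setP => y; rewrite !inE; apply/idP/idP.
    by move/H => [->|->]; rewrite eqxx ?orbT.
  by move=> /orP [/eqP ->|/eqP ->].
by rewrite cards2 ne.
Qed.

Section Sub.
Variable T : graph.
Hypothesis sym : symmetric (adj T).
Hypothesis irr : irreflexive (adj T).
Variable n : nat.
Let Ts := subdiv n.+1 T.

Lemma sub_sym : symmetric (adj Ts).
Proof.
case=> [a|[e i]] [b|[f j]] //=.
by rewrite eq_sym orbC.
Qed.

Lemma sub_irr : irreflexive (adj Ts).
Proof.
case=> [a|[e i]] //=; rewrite eqxx orbb /=; apply/negP => /eqP; lia.
Qed.

Lemma edge_adj (e : edge_type T) : adj T (val e).1 (val e).2.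
Proof. by case: e => p /=; rewrite inE => /andP []. Qed.

Lemma edge_neq (e : edge_type T) : (val e).1 != (val e).2.
Proof. by apply/eqP => E; have := edge_adj e; rewrite E irr. Qed.

Lemma deg_inr e (i : 'I_n.+1) : deg (inr (e, i) : vert Ts) = 2.
Proof.
pose p1 : vert Ts := if (i == 0 :> nat) then inl (val e).1 else inr (e, inord i.-1).
pose p2 : vert Ts := if (i == n :> nat) then inl (val e).2 else inr (e, inord i.+1).
have iltn := ltn_ord i.
apply: (@card2 _ _ p1 p2); rewrite ?inE.
- rewrite /p1; case: ifP => /= i0; first by rewrite eqxx i0.
  rewrite eqxx /= inordK; last by lia.
  move/negbT: i0; lia.
- rewrite /p2; case: ifP => /= i0; first by rewrite eqxx i0 orbT.
  rewrite eqxx /= inordK; last by move/eqP: i0; lia.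
  by rewrite eqxx.
- rewrite /p1 /p2; case: ifP => i0; case: ifP => i1 //.
  + by rewrite /= (inj_eq (@inl_inj _ _)) edge_neq.
  + apply/eqP => -[] /(congr1 val); rewrite /= !inordK; lia.
- case=> [a|[f j]]; rewrite inE /=.
    move=> /orP [/andP [/eqP -> /eqP i0]|/andP [/eqP -> /eqP i0]].
      by left; rewrite /p1 i0 eqxx.
    by right; rewrite /p2 i0 eqxx.
  move=> /andP [/eqP <-] /orP [/eqP ij|/eqP ij].
    right; rewrite /p2; case: ifP => [/eqP|] i0.
      have := ltn_ord j; lia.
    by congr (inr (_, _)); apply: val_inj; rewrite /= inordK; lia.
  left; rewrite /p1; case: ifP => [/eqP|] i0; first by lia.
  by congr (inr (_, _)); apply: val_inj; rewrite /= inordK; have := ltn_ord j; lia.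
Qed.


Definition oth (a : vert T) (e : edge_type T) : vert T :=
  if (val e).1 == a then (val e).2 else (val e).1.

Lemma inl_nb a e (i : 'I_n.+1) : adj Ts (inl a) (inr (e, i)) ->
  (val e = (a, oth a e) /\ (i : nat) = 0) \/ (val e = (oth a e, a) /\ (i : nat) = n).
Proof.
rewrite /oth; case: e => [[x y] H] /=.
move=> /orP [/andP [/eqP <- /eqP ->]|/andP [/eqP <- /eqP ->]]; rewrite ?eqxx; first by left.
right; split => //; case: eqP => // E; subst x.
by [].
Qed.

Lemma deg_inl a : deg (inl a : vert Ts) = deg a.
Proof.
pose f (y : vert Ts) : vert T := match y with inl b => b | inr (e, _) => oth a e end.
rewrite /deg.
have -> : [set y | adj T a y] = f @: [set y | adj Ts (inl a) y].
  apply/setP => b; rewrite inE; apply/idP/imsetP.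
    move=> Hab.
    case: (ltnP (enum_rank a) (enum_rank b)) => Hr.
      have H : (a, b) \in edges T by rewrite inE /= Hab.
      exists (inr (exist _ (a, b) H, ord0)); first by rewrite inE /= !eqxx.
      by rewrite /= /oth /= eqxx.
    have ne : (enum_rank b : nat) != enum_rank a.
      apply/negP => /eqP /val_inj /enum_rank_inj E.
      by move: Hab; rewrite E irr.
    have H : (b, a) \in edges T by rewrite inE /= sym Hab ltn_neqAle ne Hr.
    exists (inr (exist _ (b, a) H, ord_max)); first by rewrite inE /= !eqxx orbT.
    rewrite /= /oth /=; case: eqP => // E; by move: Hab; rewrite E irr.
  case=> -[b0|[e i]]; rewrite inE //= => Hn ->.
  case: (inl_nb Hn) => [[E _]|[E _]].
    by have := edge_adj e; rewrite E.
  by have := edge_adj e; rewrite E sym.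
rewrite card_in_imset //.
move=> [b1|[e1 i1]] [b2|[e2 i2]]; rewrite !inE //= => H1 H2 /= E.
have rk : forall x y : vert T, (x, y) \in edges T -> (y, x) \in edges T -> False.
  move=> x y; rewrite !inE /= => /andP [_ h1] /andP [_ h2]; lia.
case: (inl_nb H1) => [[E1 i1']|[E1 i1']]; case: (inl_nb H2) => [[E2 i2']|[E2 i2']].
- congr (inr (_, _)); first by apply: val_inj; rewrite E1 E2 E.
  by apply: val_inj; rewrite /= i1' i2'.
- exfalso; apply: (rk a (oth a e1)); [rewrite -E1 | rewrite E -E2]; exact: valP.
- exfalso; apply: (rk a (oth a e2)); [rewrite -E2 | rewrite -E -E1]; exact: valP.
- congr (inr (_, _)); first by apply: val_inj; rewrite E1 E2 E.
  by apply: val_inj; rewrite /= i1' i2'.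
Qed.

End Sub.

Lemma cyc (G : graph) : symmetric (adj G) -> irreflexive (adj G) ->
  (forall x : vert G, deg x = 0 \/ deg x = 2) ->
  forall N (y0 y1 : vert G) t, #|vert G| - size t <= N ->
  uniq [:: y0, y1 & t] -> path (adj G) y0 (y1 :: t) ->
  exists c, [/\ uniq c, 3 <= size c & cycle (adj G) c].
Proof.
move=> sym irr H02; elim=> [|N IH] y0 y1 t hN hu hp;
  have hsz : (size t).+2 <= #|vert G| by rewrite -[(size t).+2]/(size [:: y0, y1 & t]) -(card_uniqP hu); apply: max_card.
  lia.
have a01 : adj G y0 y1 by move: hp => /= /andP [].
have d2 : deg y0 = 2.
  case: (H02 y0) => // d0; exfalso.
  move: d0; rewrite /deg => /eqP; rewrite cards_eq0 => /eqP E.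
  by have := in_set0 y1; rewrite -E inE a01.
have : 0 < #|[set y | adj G y0 y] :\ y1|.
  move: d2; rewrite /deg (cardsD1 y1) inE a01 /=; lia.
case/card_gt0P => z; rewrite !inE => /andP [zy1 a0z].
have zy0 : z != y0 by apply/eqP => E; move: a0z; rewrite E irr.
case: (boolP (z \in t)) => zt.
  case/splitPr: zt hu hp => t1 t2 hu hp.
  exists [:: y0, y1 & t1 ++ [:: z]]; split.
  - move: hu; rewrite -cat_cons -cat_cons -[z :: t2]cat1s catA cat_uniq.
    by case/andP.
  - by rewrite /= size_cat /= addn1.
  - rewrite /= rcons_cat /= cat_path /=.
    move: hp; rewrite -cat_cons cat_path /= => /andP [/andP [-> ->] /andP [-> _]].
    by rewrite sym a0z.
apply: (IH z y0 (y1 :: t)).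
- change (#|vert G| - (size t).+1 <= N); move: hN; change (#|vert G| - size t <= N.+1 -> #|vert G| - (size t).+1 <= N); lia.
- by move: hu; rewrite /= !in_cons !negb_or zy0 zy1 zt.
- by rewrite /= sym a0z.
Qed.

Lemma Inv_neutral (G : graph) : Inv G -> neutral G.
Proof. by case=> sym irr H2 Hs Hw; apply: neutral_of. Qed.

Lemma Inv_subdiv (T : graph) (n : nat) (e : edge_type T) :
  is_tree T ->
  (\sum_(p in edges T) (deg p.1 + deg p.2) = 4 * nedges T)%N ->
  Inv (subdiv n.+1 T).
Proof.
case=> [[sym irr] _ acy] Hsum.
split.
- exact: sub_sym.
- exact: sub_irr.
- case=> [a|[f i]] [b|[g j]] //= _; rewrite ?(deg_inr irr); by [right | left].
- rewrite !big_sumType /=; congr (_ + _).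
    rewrite (eq_bigr (fun a => deg a * deg a)); last by move=> a _; rewrite (deg_inl sym irr).
    rewrite -(@dsum T sym irr (@deg T)) Hsum.
    rewrite (eq_bigr (fun a => 2 * deg a)); last by move=> a _; rewrite (deg_inl sym irr).
    by rewrite -big_distrr /= -(nedgesE sym irr) mulnA.
  by apply: eq_bigr => -[f i] _; rewrite (deg_inr irr).
- case: (pickP (fun w : vert T => (deg w != 0) && (deg w != 2))) => [w /andP [w0 w2]|H].
    by exists (inl w); rewrite (deg_inl sym irr).
  exfalso.
  have H02 : forall x : vert T, deg x = 0 \/ deg x = 2.
    move=> x; have := H x; rewrite /=; case: (deg x) => [|[|[|k]]] //=; by [left|right].
  have hu : uniq [:: (val e).1; (val e).2] by rewrite /= inE andbT (edge_neq irr).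
  have hp : path (adj T) (val e).1 [:: (val e).2] by rewrite /= edge_adj.
  have [c [cu cs cc]] := @cyc T sym irr H02 #|vert T| (val e).1 (val e).2 [::] (leq_subr _ _) hu hp.
  by move: (acy c cu cs); rewrite cc.
Qed.

Theorem corollary1 (T : graph) :
  is_tree T ->
  (\sum_(p in edges T) (deg p.1 + deg p.2) = 4 * nedges T)%N ->
  forall s : nat, (0 < s)%N ->
  forall u v : vert (subdiv s T), adj (subdiv s T) u v ->
    neutral (sdiv1 u v) /\
    (forall x y : vert (sdiv1 u v), adj (sdiv1 u v) x y -> neutral (sdiv1 x y)).
Proof.
move=> Ht Hsum [|n] // _ u v huv.
have [e _] : exists e : edge_type T, True.
  by case: u huv => [a|[e i]]; [case: v => [b|[e i]] // _ | move=> _]; exists e.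
have I0 := Inv_subdiv n e Ht Hsum.
have I1 := Inv_sdiv1 I0 huv.
split; first exact: Inv_neutral.
move=> x y hxy; apply: Inv_neutral; exact: Inv_sdiv1 I1 hxy.
Qed.
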